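(* Let $\varphi\in L_{loc}(\mathbb{R}^n_+)$ be nonnegative. Then for every $r\ge1$ and every $\alpha\in\mathbb{R}$, $$\int_{\mathbb{R}^n_+}(T\varphi(x))^r\pi(x)^\alpha\,dx\le 2^{\max(1,\alpha)n}\int_{\mathbb{R}^n_+}\varphi(x)^r\pi(x)^\alpha\,dx.$$
   Context: $\mathbb{R}^n_+=(0,\infty)^n$. For $x=(x_1,\dots,x_n)\in\mathbb{R}^n_+$, $\pi(x)=\prod_{k=1}^n x_k$ and $Q(x)=[x_1/2,x_1]\times\cdots\times[x_n/2,x_n]$. For nonnegative $\varphi\in L_{loc}(\mathbb{R}^n_+)$, $T\varphi(x)=\frac{1}{|Q(x)|}\int_{Q(x)}\varphi(u)\,du$. *)

(* Defs.v *)
From HB Require Import structures.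
From mathcomp Require Import all_boot all_order all_algebra.
From mathcomp Require Import all_classical all_reals all_analysis.
Unset Strict Implicit. Unset Printing Implicit Defensive.
Import Order.TTheory GRing.Theory Num.Theory.
Import numFieldNormedType.Exports.
Local Open Scope classical_set_scope.
Local Open Scope ring_scope.

Section defs.
Context {R : realType}.

(* n-dimensional Lebesgue measure on R^n = n.-tuple R, built as the iterated
   product measure (same construction as the library's [product_measure1]):
   lambda_0 = Dirac mass at the empty tuple,
   lambda_{n+1}(A) = \int_R lambda_n (section of A at x) dx. *)
Fixpoint leb_n (n : nat) : set (n.-tuple R) -> \bar R :=
  match n as m return set (m.-tuple R) -> \bar R with
  | 0 => fun A => if `[< A [tuple] >] then 1%E else 0%E
  | m.+1 => fun A =>
      (\int[@lebesgue_measure R]_x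
          leb_n m [set t : m.-tuple R | A [tuple of (x : R) :: t]])%E
  end.

Definition Rnpos (n : nat) : set (n.-tuple R) :=
  [set x | forall i : 'I_n, 0 < tnth x i].

Definition pi_prod (n : nat) (x : n.-tuple R) : R := \prod_(i < n) tnth x i.

Definition cbox (n : nat) (a b : n.-tuple R) : set (n.-tuple R) :=
  [set u | forall i : 'I_n, tnth a i <= tnth u i <= tnth b i].

Definition Qbox (n : nat) (x : n.-tuple R) : set (n.-tuple R) :=
  [set u | forall i : 'I_n, tnth x i / 2 <= tnth u i <= tnth x i].

(* phi in L_loc(R^n_+): measurable on R^n_+ and integrable on every compact
   subset of R^n_+; equivalently (every compact subset of (0,oo)^n lies in
   such a cbox) integrable on every closed cbox [a,b] with all a_k > 0. *)
Definition Lloc_pos (n : nat) (phi : n.-tuple R -> R) : Prop :=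
  measurable_fun (Rnpos n) phi /\
  forall a b : n.-tuple R, (forall i : 'I_n, 0 < tnth a i) ->
    (leb_n n).-integrable (cbox n a b) (fun u => (phi u)%:E).

Definition avgT (n : nat) (phi : n.-tuple R -> R) (x : n.-tuple R) : R :=
  fine (\int[leb_n n]_(u in Qbox n x) (phi u)%:E)%E / fine (leb_n n (Qbox n x)).

End defs.

(* Main.v *)
Require Import Defs.
From HB Require Import structures.
From mathcomp Require Import all_boot all_order all_algebra.
From mathcomp Require Import all_classical all_reals all_analysis.
From mathcomp Require Import measurable_realfun.
From mathcomp Require Import ring lra.
Import Order.TTheory GRing.Theory Num.Theory.
Import numFieldNormedType.Exports.
Local Open Scope classical_set_scope.
Local Open Scope ring_scope.
Section prodsf.
Local Open Scope ereal_scope.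
Context d1 d2 (T1 : measurableType d1) (T2 : measurableType d2) (R : realType).
Variable m1 : {sigma_finite_measure set T1 -> \bar R}.
Variable m2 : {sigma_finite_measure set T2 -> \bar R}.

Lemma my_pm_sigma_finite : sigma_finite setT (m1 \x m2).
Proof.
have /sigma_finiteP[F [TF ndF Foo]] := sigma_finiteT m1.
have /sigma_finiteP[G [TG ndG Goo]] := sigma_finiteT m2.
exists (fun n => F n `*` G n).
 rewrite -setXTT TF TG predeqE => -[x y]; split.
    move=> [/= [n _ Fnx] [k _ Gky]]; exists (maxn n k) => //; split.
    - by move: x Fnx; exact/subsetPset/ndF/leq_maxl.
    - by move: y Gky; exact/subsetPset/ndG/leq_maxr.
  by move=> [n _ []/= ? ?]; split; exists n.
move=> k; have [? ?] := Foo k; have [? ?] := Goo k.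
split; first exact: measurableX.
by rewrite product_measure1E// lte_mul_pinfty// ge0_fin_numE.
Qed.
End prodsf.

Section constr.
Context {R : realType}.
Local Open Scope ereal_scope.

Definition consf (m : nat) (p : R * m.-tuple R) : m.+1.-tuple R :=
  [tuple of p.1 :: p.2].

Arguments consf {m}.
Lemma measurable_consf m : measurable_fun setT (@consf m).
Proof. exact: measurable_cons. Qed.

Definition uncons (m : nat) (t : m.+1.-tuple R) : R * m.-tuple R :=
  (thead t, [tuple of behead t]).

Arguments uncons {m}.
Lemma measurable_uncons m : measurable_fun setT (@uncons m).
Proof.
apply/measurable_fun_pairP; split.
- exact: measurable_tnth.
- exact: measurable_behead.
Qed.

Lemma consfK m : cancel (@consf m) (@uncons m).
Proof. by move=> [x t]; rewrite /uncons /consf /thead tnth0; congr pair; apply: val_inj. Qed.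

Lemma unconsK m : cancel (@uncons m) (@consf m).
Proof. by move=> t; apply: val_inj; rewrite /= [in RHS](tuple_eta t). Qed.

Definition leb0 : set (0.-tuple R) -> \bar R := \d_[tuple].
HB.instance Definition _ := Measure.on leb0.
Lemma leb0_sf : sigma_finite setT leb0.
Proof.
apply: fin_num_fun_sigma_finite; first by rewrite measure0.
by move=> A _; rewrite /leb0 diracE.
Qed.
HB.instance Definition _ := Measure_isSigmaFinite.Build _ _ _ leb0 leb0_sf.

Section S.
Variables (m : nat) (mu : {sigma_finite_measure set (m.-tuple R) -> \bar R}).
Definition lebS : set (m.+1.-tuple R) -> \bar R :=
  pushforward ((@lebesgue_measure R) \x mu) (@consf m).
Let lebS0 : lebS set0 = 0.
Proof. by rewrite /lebS /pushforward preimage_set0 measure0. Qed.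
Let lebS_ge0 A : 0 <= lebS A.
Proof. by rewrite /lebS /pushforward; exact: measure_ge0. Qed.
Let lebS_sa : semi_sigma_additive lebS.
Proof.
move=> F mF tF mUF; rewrite /lebS /pushforward preimage_bigcup.
apply: measure_semi_sigma_additive.
- by move=> n; rewrite -[X in measurable X]setTI; exact: measurable_consf.
- apply/trivIsetP => /= i j _ _ ij; rewrite -preimage_setI.
  by move/trivIsetP : tF => /(_ _ _ _ _ ij) ->//; rewrite preimage_set0.
- by rewrite -preimage_bigcup -[X in measurable X]setTI; exact: measurable_consf.
Qed.
HB.instance Definition _ := isMeasure.Build _ _ _ lebS lebS0 lebS_ge0 lebS_sa.
Let lebS_sf : sigma_finite setT lebS.
Proof.
have [F FT Fm] := @my_pm_sigma_finite _ _ _ _ _ (@lebesgue_measure R) mu.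
exists (fun i => (@uncons m) @^-1` F i).
  apply/seteqP; split => // t _.
  have : (setT : set (R * m.-tuple R)) (uncons t) by [].
  by rewrite FT => -[i _ Fi]; exists i.
move=> i; split.
  by rewrite -[X in measurable X]setTI; apply: measurable_uncons => //; case: (Fm i).
rewrite /lebS /pushforward.
have -> : consf @^-1` (uncons @^-1` F i) = F i.
  by apply/seteqP; split => p /=; rewrite consfK.
by case: (Fm i).
Qed.
HB.instance Definition _ := Measure_isSigmaFinite.Build _ _ _ lebS lebS_sf.
End S.

Fixpoint lebn (n : nat) : {sigma_finite_measure set (n.-tuple R) -> \bar R} :=
  match n with
  | 0 => leb0
  | m.+1 => @lebS m (lebn m)
  end.

Lemma leb_nE n : leb_n n = lebn n.
Proof.
elim: n => [|m IH]; apply/funext => A.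
  rewrite /= /leb0 diracE; case: asboolP => [h|h].
    by rewrite mem_set.
  by rewrite memNset.
rewrite /= IH /lebS /pushforward /product_measure1 /=.
apply: eq_integral => x _ /=; congr (lebn m _).
by apply/seteqP; split => t /=; rewrite /xsection /= inE /consf.
Qed.

Lemma forall_ordS m (P : 'I_m.+1 -> Prop) :
  (forall i, P i) <-> P ord0 /\ (forall j : 'I_m, P (lift ord0 j)).
Proof.
split; first by move=> h; split.
by move=> [h0 h] i; case: (unliftP ord0 i) => [j ->|->].
Qed.

Lemma cbox_cons m a0 b0 x (a b t : m.-tuple R) :
  cbox m.+1 [tuple of a0 :: a] [tuple of b0 :: b] [tuple of x :: t] <->
  (a0 <= x <= b0)%R /\ cbox m a b t.
Proof.
rewrite /cbox /= forall_ordS !tnth0.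
by split => -[h1 h2]; split => // j; have := h2 j; rewrite !tnthS.
Qed.

Lemma lebn_cbox n (a b : n.-tuple R) : (forall i, tnth a i <= tnth b i)%R ->
  lebn n (cbox n a b) = (\prod_(i < n) (tnth b i - tnth a i))%:E.
Proof.
elim: n a b => [|m IH] a b ab.
  rewrite big_ord0 /= /leb0 diracE mem_set //.
  by move=> [] [].
case/tupleP: a ab => a0 a; case/tupleP: b => b0 b ab.
have ab0 : (a0 <= b0)%R by have := ab ord0; rewrite !tnth0.
have ab' : forall i, (tnth a i <= tnth b i)%R by move=> i; have := ab (lift ord0 i); rewrite !tnthS.
rewrite big_ord_recl !tnth0.
under eq_bigr do rewrite !tnthS.
rewrite /= /lebS /pushforward /product_measure1 /=.
transitivity (\int[@lebesgue_measure R]_x ((\1_`[a0, b0] x)%:E * lebn m (cbox m a b)))%E.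
  apply: eq_integral.
  move=> x _; rewrite indicE /= (_ : (x \in `[a0, b0]%classic) = (a0 <= x <= b0)%R); last first.
    by apply/idP/idP; rewrite inE /= in_itv.
  have [xin|xnin] := boolP (a0 <= x <= b0)%R.
    rewrite mul1e; congr (lebn m _); apply/seteqP; split => t /=;
      rewrite /xsection /= inE /consf /= cbox_cons.
      by case.
    by move=> ?; split.
  rewrite mul0e -[RHS](measure0 (lebn m)); congr (lebn m _).
  apply/seteqP; split => t //=; rewrite /xsection /= inE /consf /= cbox_cons.
  by move=> [h _]; move: xnin; rewrite h.
have mi : measurable_fun setT (fun x : R => (\1_`[a0, b0] x)%:E : \bar R).
  by apply/measurable_EFinP; exact: measurable_indic.
rewrite ge0_integralZr //.
rewrite integral_indic // setIT.
have hl : @lebesgue_measure R `[a0, b0]%classic = (b0 - a0)%:E.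
  rewrite lebesgue_measure_itv /= lte_fin; case: ltgtP ab0 => // -> _.
  by rewrite subrr.
transitivity ((b0 - a0)%:E * lebn m (cbox m a b)); first by congr (_ * _); exact: hl.
by rewrite IH // -EFinM.
Qed.
End constr.

Section helpers.
Context {R : realType}.

Lemma powR_prod n (f : 'I_n -> R) p : (forall i, 0 <= f i) ->
  (\prod_(i < n) f i) `^ p = \prod_(i < n) (f i `^ p).
Proof.
move=> f0.
have : 0 <= \prod_(i < n) f i /\ (\prod_(i < n) f i) `^ p = \prod_(i < n) (f i `^ p).
  apply: (big_rec2 (fun y1 y2 => 0 <= y1 /\ y1 `^ p = y2)).
    by rewrite powR1.
  move=> i y1 y2 _ [y10 <-].
  by split; [exact: mulr_ge0|exact: powRM].
by case.
Qed.

Lemma measurable_le d (T : measurableType d) (f g : T -> R) :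
  measurable_fun setT f -> measurable_fun setT g ->
  measurable [set x | f x <= g x].
Proof.
move=> mf mg.
have -> : [set x | f x <= g x] = setT `&` (fun x => g x - f x) @^-1` `[0, +oo[.
  apply/seteqP; split => x /=; first by rewrite in_itv /= andbT subr_ge0.
  by move=> [_]; rewrite in_itv /= andbT subr_ge0.
by apply: (measurable_funB mg mf) => //; exact: measurable_itv.
Qed.

Lemma measurable_Rnpos n : measurable (@Rnpos R n).
Proof.
have -> : @Rnpos R n = \bigcap_(i in setT) ((fun x : n.-tuple R => tnth x i) @^-1` `]0, +oo[).
  apply/seteqP; split => x /=.
    by move=> h i _ /=; rewrite in_itv /= andbT h.
  by move=> h i; have := h i I; rewrite /= in_itv /= andbT.
apply: fin_bigcap_measurable; first exact: finite_finset.
move=> i _; rewrite -[X in measurable X]setTI.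
by apply: measurable_tnth => //; exact: measurable_itv.
Qed.

Definition Qrel n : set (n.-tuple R * n.-tuple R) := [set z | Qbox n z.1 z.2].

Lemma measurable_Qrel n : measurable (Qrel n).
Proof.
have -> : Qrel n = \bigcap_(i in setT)
   ([set z : n.-tuple R * n.-tuple R | tnth z.1 i / 2 <= tnth z.2 i] `&`
    [set z | tnth z.2 i <= tnth z.1 i]).
  apply/seteqP; split => x /=.
    by move=> h i _ /=; have /andP[] := h i.
  by move=> h i; have [/= -> ->] := h i I.
have m1 i : measurable_fun setT (fun z : n.-tuple R * n.-tuple R => tnth z.1 i).
  exact: (measurableT_comp (measurable_tnth i) measurable_fst).
have m2 i : measurable_fun setT (fun z : n.-tuple R * n.-tuple R => tnth z.2 i).
  exact: (measurableT_comp (measurable_tnth i) measurable_snd).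
apply: fin_bigcap_measurable; first exact: finite_finset.
move=> i _; apply: measurableI; apply: measurable_le => //.
by apply: measurable_funM => //; exact: measurable_cst.
Qed.

Lemma measurable_pi n : measurable_fun setT (@pi_prod R n).
Proof. by apply: measurable_prod => i _; exact: measurable_tnth. Qed.

Lemma tangent_ineq (r m t : R) : 1 <= r -> 0 < m -> 0 <= t ->
  r * m `^ (r - 1) * t <= t `^ r + (r - 1) * m `^ r.
Proof.
rewrite le_eqVlt => /predU1P[<- m0 t0|r1 m0 t0].
  by rewrite subrr powRr0 mul0r addr0 mulr1 mul1r powRr1.
have r0 : 0 < r by exact: lt_trans r1.
have r10 : 0 < r - 1 by rewrite subr_gt0.
pose q := r / (r - 1).
have q0 : 0 < q by rewrite divr_gt0.
have pq : r^-1 + q^-1 = 1.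
  by rewrite /q invf_div; field; rewrite gt_eqF.
have := conjugate_powR t0 (powR_ge0 m (r - 1)) r0 q0 pq.
rewrite -powRrM (_ : (r - 1) * q = r); last by rewrite /q; field; rewrite gt_eqF.
move=> h.
have e1 : r * m `^ (r - 1) * t = r * (t * m `^ (r - 1)) by ring.
have e2 : t `^ r + (r - 1) * m `^ r = r * (t `^ r / r + m `^ r / q).
  by rewrite /q; field; rewrite !gt_eqF.
rewrite e1 e2; by rewrite ler_pM2l.
Qed.

End helpers.

Section mono.
Local Open Scope ereal_scope.
Context {d} {T : measurableType d} {R : realType} (mu : {measure set T -> \bar R}).
Lemma le_integral_nm {D : set T} {f g : T -> \bar R} :
  (forall x, D x -> 0 <= f x) -> (forall x, D x -> f x <= g x) ->
  \int[mu]_(x in D) f x <= \int[mu]_(x in D) g x.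
Proof.
move=> f0 fg; rewrite !(integral_mkcond D).
have g0 : forall x, D x -> 0 <= g x by move=> x Dx; exact: le_trans (f0 _ Dx) (fg _ Dx).
rewrite !ge0_integralTE; [|exact: erestrict_ge0|exact: erestrict_ge0].
apply: ereal_sup_le => _ [h /= hf <-]; exists h => //= x.
exact: le_trans (hf x) (lee_restrict fg x).
Qed.
End mono.

Section jensen.
Context {R : realType}.
Local Open Scope ereal_scope.

Lemma measurable_cbox n (a b : n.-tuple R) : measurable (cbox n a b).
Proof.
have -> : cbox n a b = \bigcap_(i in setT)
    ((fun x : n.-tuple R => tnth x i) @^-1` `[tnth a i, tnth b i]).
  apply/seteqP; split => x /=.
    by move=> h i _ /=; rewrite in_itv /= h.
  by move=> h i; have := h i I; rewrite /= in_itv /=.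
apply: fin_bigcap_measurable; first exact: finite_finset.
move=> i _; rewrite -[X in measurable X]setTI.
by apply: measurable_tnth => //; exact: measurable_itv.
Qed.

Lemma Qbox_cbox n (x : n.-tuple R) : Qbox n x = cbox n [tuple tnth x i / 2 | i < n]%R x.
Proof.
by apply/seteqP; split => u /= h i; have := h i; rewrite tnth_mktuple.
Qed.

Lemma measurable_Qbox n (x : n.-tuple R) : measurable (Qbox n x).
Proof. by rewrite Qbox_cbox; exact: measurable_cbox. Qed.

Lemma pi_gt0 n (x : n.-tuple R) : Rnpos n x -> (0 < pi_prod n x)%R.
Proof. by move=> hx; apply: prodr_gt0 => i _; exact: hx. Qed.

Lemma Qbox_sub n (x : n.-tuple R) : Rnpos n x -> Qbox n x `<=` Rnpos n.
Proof.
move=> hx u hu i; have /andP[h1 _] := hu i.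
by apply: lt_le_trans h1; rewrite divr_gt0 // hx.
Qed.

Lemma lebn_Qbox n (x : n.-tuple R) : Rnpos n x ->
  lebn n (Qbox n x) = (pi_prod n x / 2 ^+ n)%:E.
Proof.
move=> hx; rewrite Qbox_cbox lebn_cbox; last first.
  move=> i; rewrite tnth_mktuple; have := hx i; lra.
congr EFin.
transitivity (\prod_(i < n) (tnth x i * 2^-1))%R.
  by apply: eq_bigr => i _; rewrite tnth_mktuple; field.
by rewrite big_split /= prodr_const card_ord exprVn.
Qed.

Lemma jensen_box n (phi : n.-tuple R -> R) (x : n.-tuple R) (r : R) :
  (1 <= r)%R -> Rnpos n x -> (forall u, Rnpos n u -> (0 <= phi u)%R) ->
  measurable_fun (Rnpos n) phi ->
  ((avgT n phi x) `^ r * (pi_prod n x / 2 ^+ n))%:E <=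
  \int[lebn n]_(u in Qbox n x) ((phi u) `^ r)%:E.
Proof.
move=> r1 hx phi0 mphi.
have r0 : (0 < r)%R by exact: lt_le_trans r1.
have mQ := measurable_Qbox n x.
have QD := Qbox_sub n x hx.
have mphiQ : measurable_fun (Qbox n x) phi.
  exact: measurable_funS (measurable_Rnpos n) QD mphi.
have phiQ0 u : Qbox n x u -> (0 <= phi u)%R by move=> /QD; exact: phi0.
rewrite /avgT !leb_nE lebn_Qbox //=.
set V := (pi_prod n x / 2 ^+ n)%R.
have V0 : (0 < V)%R by rewrite divr_gt0 ?pi_gt0 // exprn_gt0.
set Iq := \int[lebn n]_(u in Qbox n x) (phi u)%:E.
have I0 : 0 <= Iq by apply: integral_ge0 => u /phiQ0; rewrite lee_fin.
have J0 : 0 <= \int[lebn n]_(u in Qbox n x) ((phi u) `^ r)%:E.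
  by apply: integral_ge0 => u _; rewrite lee_fin powR_ge0.
have [[i Ii]|Iy] : (exists i, Iq = i%:E) \/ (Iq = +oo).
  have := I0; case E : Iq => [i| |] _; [by left; exists i|by right|].
  by move: I0; rewrite E leNgt ltNyr.
- rewrite Ii /=.
  have i0 : (0 <= i)%R by rewrite -lee_fin -Ii.
  set m := (i / V)%R.
  have m0 : (0 <= m)%R by rewrite divr_ge0 // ltW.
  have [->|mpos] := eqVneq m 0%R.
    by rewrite powR0 ?gt_eqF // mul0r.
  have {mpos}mpos : (0 < m)%R by rewrite lt_def mpos m0.
  have h : forall u, Qbox n x u ->
     ((r * m `^ (r - 1)) * phi u)%:E <= ((phi u) `^ r + (r - 1) * m `^ r)%:E.
    by move=> u hu; rewrite lee_fin; apply: tangent_ineq => //; exact: phiQ0.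
  have c0 : (0 <= r * m `^ (r - 1))%R by rewrite mulr_ge0 ?powR_ge0 // ltW.
  have c1 : (0 <= (r - 1) * m `^ r)%R by rewrite mulr_ge0 ?powR_ge0 // subr_ge0.
  have h0 : forall u, Qbox n x u -> 0 <= ((r * m `^ (r - 1)) * phi u)%:E.
    by move=> u hu; rewrite lee_fin mulr_ge0 //; exact: phiQ0.
  have H := le_integral_nm (lebn n) h0 h.
  have eL : \int[lebn n]_(u in Qbox n x) ((r * m `^ (r - 1)) * phi u)%:E =
      (r * m `^ (r - 1))%:E * Iq.
    rewrite (eq_integral (fun u => (r * m `^ (r - 1))%:E * (phi u)%:E)); last first.
      by move=> u _; rewrite EFinM.
    have mphiQE : measurable_fun (Qbox n x) (fun u => (phi u)%:E).
      exact/measurable_EFinP.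
    have phiQE0 : forall u, Qbox n x u -> 0 <= (phi u)%:E.
      by move=> u hu; rewrite lee_fin; exact: phiQ0.
    exact: (ge0_integralZl_EFin _ mQ phiQE0 mphiQE c0).
  have eR : \int[lebn n]_(u in Qbox n x) ((phi u) `^ r + (r - 1) * m `^ r)%:E =
      \int[lebn n]_(u in Qbox n x) ((phi u) `^ r)%:E + ((r - 1) * m `^ r * V)%:E.
    rewrite (eq_integral (fun u => ((phi u) `^ r)%:E + ((r - 1) * m `^ r)%:E)); last first.
      by move=> u _; rewrite EFinD.
    have f10 : forall u, Qbox n x u -> 0 <= ((phi u) `^ r)%:E.
      by move=> u _; rewrite lee_fin powR_ge0.
    have mf1 : measurable_fun (Qbox n x) (fun u => ((phi u) `^ r)%:E).
      apply/measurable_EFinP; exact: (measurableT_comp (measurable_powR r) mphiQ).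
    have f20 : forall u, Qbox n x u -> 0 <= ((r - 1) * m `^ r)%:E.
      by move=> u _; rewrite lee_fin.
    rewrite (ge0_integralD _ mQ f10 mf1 f20 (measurable_cst _)).
    have := integral_cst (lebn n) mQ ((r - 1) * m `^ r)%:E.
    move=> /= ->; congr (_ + _); rewrite [RHS]EFinM; congr (_ * _).
    have LQ := lebn_Qbox n x hx. exact: LQ.
  move: H; rewrite eL eR Ii.
  rewrite -!EFinM -leeBlDr // -EFinB => H.
  apply: le_trans H; rewrite lee_fin.
  suff -> : (r * m `^ (r - 1) * i - (r - 1) * m `^ r * V = m `^ r * V)%R by rewrite lexx.
  have -> : i = (m * V)%R by rewrite /m divfK // gt_eqF.
  have -> : (r * m `^ (r - 1) * (m * V) = r * m `^ r * V)%R.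
    by rewrite -[in RHS](mulr_powRB1 (ltW mpos) r0); ring.
  ring.
- by rewrite Iy /= mul0r powR0 ?gt_eqF // mul0r.
Qed.
End jensen.

Section coord.
Context {R : realType}.

Definition Mc (alpha u : R) : R :=
  if (1 <= alpha)%R then (2 * u) `^ (alpha - 1) else u `^ (alpha - 1).

Lemma powR_m1 (x a : R) : 0 < x -> x `^ (a - 1) * x = x `^ a.
Proof.
move=> x0; rewrite -{2}(powRr1 (ltW x0)) -powRD; first by rewrite subrK.
by apply/implyP => _; rewrite gt_eqF.
Qed.

Lemma Mc_bound (alpha u t : R) : 0 < u -> u <= t -> t <= 2 * u ->
  t `^ (alpha - 1) <= Mc alpha u.
Proof.
move=> u0 ut t2u; have t0 : 0 < t by exact: lt_le_trans ut.
rewrite /Mc; case: ifPn => a1.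
  apply: ge0_ler_powR => //; first by rewrite subr_ge0.
  - by rewrite nnegrE ltW.
  - by rewrite nnegrE mulr_ge0 // ltW.
rewrite -ltNge in a1.
rewrite (_ : alpha - 1 = - (1 - alpha)); last by ring.
rewrite !powRN ler_pV2; last 2 first.
- by rewrite inE unitfE gt_eqF ?powR_gt0 //=.
- by rewrite inE unitfE gt_eqF ?powR_gt0 //=.
apply: ge0_ler_powR => //; first by rewrite subr_ge0 ltW.
- by rewrite nnegrE ltW.
- by rewrite nnegrE ltW.
Qed.

Lemma Mc_eq (alpha u : R) : 0 < u ->
  2 * Mc alpha u * u = 2 `^ (Num.max 1 alpha) * u `^ alpha.
Proof.
move=> u0; rewrite /Mc; case: ifPn => a1.
  rewrite (max_idPr a1) powRM ?(ltW u0) //.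
  have two0 : (0 : R) < 2 by [].
  by rewrite -(powR_m1 u alpha u0) -(powR_m1 2 alpha two0); ring.
rewrite -ltNge in a1; rewrite (max_idPl (ltW a1)) powRr1 //.
by rewrite -(powR_m1 u alpha u0) mulrA.
Qed.

End coord.

Theorem lemma5p1 (R : realType) (n : nat) (phi : n.-tuple R -> R) :
  (forall x, Rnpos n x -> 0 <= phi x) ->
  Lloc_pos n phi ->
  forall r alpha : R, 1 <= r ->
  (\int[leb_n n]_(x in Rnpos n) ((avgT n phi x) `^ r * (pi_prod n x) `^ alpha)%:E
   <= (2 `^ (Num.max 1 alpha * n%:R))%:E *
      \int[leb_n n]_(x in Rnpos n) ((phi x) `^ r * (pi_prod n x) `^ alpha)%:E)%E.
Proof.
move=> phi0 [mphi _] r alpha r1.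
rewrite !leb_nE.
have mD := @measurable_Rnpos R n.
set D := Rnpos n in mD phi0 mphi *.
set c := Num.max 1 alpha.
set K := 2 `^ (c * n%:R).
pose phir := (fun u => phi u `^ r) \_ D.
pose w := fun x : n.-tuple R => 2 ^+ n * pi_prod n x `^ (alpha - 1).
pose F := fun z : n.-tuple R * n.-tuple R =>
  ((\1_D z.1 : R) * w z.1 * (\1_(Qrel n) z : R) * phir z.2)%:E.
have F0 : forall z, (0 <= F z)%E.
  move=> z; rewrite /F lee_fin.
  apply: mulr_ge0; [apply: mulr_ge0; [apply: mulr_ge0|]|].
  - by rewrite indicE.
  - by rewrite /w mulr_ge0 ?exprn_ge0 ?powR_ge0.
  - by rewrite indicE.
  - rewrite /phir patchE; case: ifPn => // _; exact: powR_ge0.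
have mphir : measurable_fun setT phir.
  rewrite /phir; apply/(measurable_restrictT _ mD).
  exact: (measurableT_comp (measurable_powR r) mphi).
have mF : measurable_fun setT F.
  apply/measurable_EFinP; apply: measurable_funM; last first.
    exact: (measurableT_comp mphir measurable_snd).
  apply: measurable_funM; last exact: measurable_indic (measurable_Qrel n).
  apply: measurable_funM.
    exact: (measurableT_comp (measurable_indic mD) measurable_fst).
  apply: (measurableT_comp _ measurable_fst).
  apply: measurable_funM; first exact: measurable_cst.
  exact: (measurableT_comp (measurable_powR _) (measurable_pi n)).
apply: (@le_trans _ _ (\int[lebn n]_x \int[lebn n]_u F (x, u))%E).
  rewrite integral_mkcond; apply: le_integral_nm.
    move=> x _; rewrite patchE; case: ifPn => // _; by rewrite lee_fin mulr_ge0 ?powR_ge0.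
  move=> x _; rewrite patchE; case: ifPn => [xD|xnD]; last first.
    by apply: integral_ge0 => u _; exact: F0.
  rewrite inE in xD.
  have pix := pi_gt0 n x xD.
  set V := (pi_prod n x / 2 ^+ n)%R.
  have J := jensen_box n phi x r r1 xD phi0 mphi.
  have mQ := measurable_Qbox n x.
  have QD := Qbox_sub n x xD.
  have w0 : (0 <= w x)%R by rewrite /w mulr_ge0 ?exprn_ge0 ?powR_ge0.
  have eqL : (pi_prod n x `^ alpha = V * w x)%R.
    rewrite /V /w -(powR_m1 _ alpha pix); field.
    by rewrite expf_neq0.
  have mg : measurable_fun setT (fun u => ((\1_(Qbox n x) u : R) * phir u)%:E).
    apply/measurable_EFinP; apply: measurable_funM; last exact: mphir.
    exact: (measurable_indic mQ).
  have g0 : forall u, setT u -> (0 <= ((\1_(Qbox n x) u : R) * phir u)%:E)%E.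
    move=> u _; rewrite lee_fin; apply: mulr_ge0; first by rewrite indicE.
    rewrite /phir patchE; case: ifPn => // _; exact: powR_ge0.
  have eqF : (\int[lebn n]_u F (x, u) =
      (\int[lebn n]_(u in Qbox n x) ((phi u) `^ r)%:E) * (w x)%:E)%E.
    transitivity (\int[lebn n]_u (((\1_(Qbox n x) u : R) * phir u)%:E * (w x)%:E))%E.
      apply: eq_integral => u _; rewrite /F /= -EFinM; congr EFin.
      rewrite !indicE mem_set // mul1r.
      rewrite (_ : ((x, u) \in Qrel n) = (u \in Qbox n x)); first by ring.
      by apply/idP/idP; rewrite !inE.
    rewrite (ge0_integralZr _ measurableT mg) //.
    congr (_ * _)%E; rewrite [RHS]integral_mkcond; apply: eq_integral => u _.
    rewrite patchE indicE; case: ifPn => uQ; last by rewrite mul0r.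
    rewrite mul1r /phir patchE mem_set //; apply: QD; by rewrite inE in uQ.
  rewrite eqF eqL mulrA EFinM; apply: lee_wpmul2r => //.
rewrite (fubini_tonelli F mF F0).
have K0 : (0 <= K)%R by rewrite powR_ge0.
have mpr : measurable_fun D (fun u => (phi u `^ r * pi_prod n u `^ alpha)%R).
  apply: measurable_funM.
    exact: (measurableT_comp (measurable_powR r) mphi).
  apply: measurableT_comp (measurable_powR _) _.
  exact: measurable_funS (measurable_pi n).
have RHSe : (K%:E * \int[lebn n]_(x in D) (phi x `^ r * pi_prod n x `^ alpha)%:E =
  \int[lebn n]_u ((fun u => (K * (phi u `^ r * pi_prod n u `^ alpha))%:E) \_ D) u)%E.
  rewrite -integral_mkcond -ge0_integralZl_EFin //.
  - by move=> u _; rewrite lee_fin mulr_ge0 ?powR_ge0.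
  - exact/measurable_EFinP.
rewrite RHSe; apply: le_integral_nm.
  by move=> u _; apply: integral_ge0 => x _; exact: F0.
move=> u _; rewrite patchE; case: ifPn => [uD|unD]; last first.
  rewrite (eq_integral (cst 0%E)); first by rewrite integral0.
  by move=> x _; rewrite /F /phir /= patchE (negbTE unD) mulr0.
rewrite inE in uD.
set B := (phi u `^ r * 2 ^+ n * \prod_(i < n) Mc alpha (tnth u i))%R.
set u2 := [tuple (2 * tnth u i)%R | i < n].
have Mc0 i : (0 <= Mc alpha (tnth u i))%R by rewrite /Mc; case: ifP => _; exact: powR_ge0.
have B0 : (0 <= B)%R by rewrite /B !mulr_ge0 ?powR_ge0 ?exprn_ge0 ?prodr_ge0.
have mbox : measurable (cbox n u u2) by exact: measurable_cbox.
have bound : forall x, (F (x, u) <= (B * \1_(cbox n u u2) x)%:E)%E.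
  move=> x; rewrite /F /= lee_fin /phir patchE mem_set // !indicE.
  have [xD|xnD] := boolP (x \in D); last by rewrite mul0r !mul0r mulr_ge0.
  have [xQ|xnQ] := boolP ((x, u) \in Qrel n); last by rewrite mulr0 mul0r mulr_ge0.
  rewrite inE in xD; rewrite inE /Qrel /Qbox /= in xQ.
  have xbox : x \in cbox n u u2.
    rewrite inE => i; rewrite tnth_mktuple.
    have /andP[h1 h2] := xQ i; apply/andP; split => //.
    by rewrite -ler_pdivrMl // mulrC.
  rewrite xbox /= mulr1n !mul1r mulr1 /B /w.
  rewrite [X in (X <= _)%R]mulrC !mulr1 -!mulrA.
  apply: ler_wpM2l; first exact: powR_ge0.
  apply: ler_wpM2l; first by rewrite exprn_ge0.
  rewrite /pi_prod powR_prod; last by move=> i; exact: ltW.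
  apply: ler_prod => i _; rewrite powR_ge0 /=.
  have /andP[h1 h2] := xQ i.
  apply: Mc_bound; [exact: uD|exact: h2|].
  by rewrite -ler_pdivrMl // mulrC.
apply: le_trans (le_integral_nm (lebn n) (fun x _ => F0 (x, u)) (fun x _ => bound x)) _.
rewrite (eq_integral (fun x => (B%:E * (\1_(cbox n u u2) x)%:E)%E)); last first.
  by move=> x _; rewrite EFinM.
have mI : measurable_fun setT (fun x => (\1_(cbox n u u2) x : R)%:E).
  by apply/measurable_EFinP; exact: measurable_indic.
have I0 : forall x, setT x -> (0 <= (\1_(cbox n u u2) x : R)%:E)%E.
  by move=> x _; rewrite lee_fin.
rewrite (ge0_integralZl_EFin _ measurableT I0 mI B0).
have hle : forall i, (tnth u i <= tnth u2 i)%R.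
  by move=> i; rewrite tnth_mktuple ler_peMl ?ler1n // ltW // uD.
have LB := lebn_cbox n u u2 hle.
rewrite integral_indic // setIT.
have -> : (B%:E * lebn n (cbox n u u2) =
    (B * \prod_(i < n) (tnth u2 i - tnth u i))%:E)%E.
  by rewrite EFinM; exact: (congr1 (fun t => (B%:E * t)%E) LB).
rewrite lee_fin le_eqVlt; apply/orP; left; apply/eqP.
have -> : (\prod_(i < n) (tnth u2 i - tnth u i) = pi_prod n u)%R.
  by apply: eq_bigr => i _; rewrite tnth_mktuple; ring.
have eP : (2 ^+ n * \prod_(i < n) Mc alpha (tnth u i) * pi_prod n u =
    \prod_(i < n) (2 * Mc alpha (tnth u i) * tnth u i))%R.
  rewrite /pi_prod big_split big_split /= prodr_const card_ord //.
have eQ : (\prod_(i < n) (2 * Mc alpha (tnth u i) * tnth u i) =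
    K * pi_prod n u `^ alpha)%R.
  rewrite (eq_bigr (fun i => 2 `^ c * tnth u i `^ alpha))%R; last first.
    by move=> i _; rewrite Mc_eq //; exact: uD.
  rewrite big_split /= prodr_const card_ord /pi_prod powR_prod; last first.
    by move=> i; exact: ltW.
  by rewrite /K powRrM powR_mulrn // powR_ge0.
transitivity (phi u `^ r * (2 ^+ n * \prod_(i < n) Mc alpha (tnth u i) * pi_prod n u))%R.
  by rewrite /B; ring.
by rewrite eP eQ; ring.
Qed.
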